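(* For every integer $n\ge 0$, $$e(n+1)=\max\{\nu(n-i)-\nu(i): i=0,1,\dots,n\},\qquad -e(n+1)=\min\{\nu(n-i)-\nu(i): i=0,1,\dots,n\}.$$
   Context: The Stern polynomials $B_n(t)\in\mathbb{Z}[t]$, $n\ge 0$, are defined by $B_0(t)=0$, $B_1(t)=1$, $B_{2n}(t)=tB_n(t)$ and $B_{2n+1}(t)=B_n(t)+B_{n+1}(t)$ for $n\ge 1$. For $n\ge 1$, $e(n)=\deg_t B_n(t)$. For $n\ge 0$, $\nu(n)$ denotes the number of digits $1$ in the binary representation of $n$. *)

(* Defs.v *)
From HB Require Import structures.
From mathcomp Require Import all_boot all_order all_algebra.
Set Implicit Arguments. Unset Strict Implicit. Unset Printing Implicit Defensive.
Import Order.TTheory GRing.Theory Num.Theory.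
Local Open Scope ring_scope.

(* Stern polynomials, computed with fuel k (k > n suffices). *)
Fixpoint stern_fuel (k n : nat) : {poly int} :=
  match k with
  | 0%N => 0
  | k'.+1 =>
    match n with
    | 0%N => 0
    | 1%N => 1
    | _ => if odd n then stern_fuel k' n./2 + stern_fuel k' (n./2).+1
           else 'X * stern_fuel k' n./2
    end
  end.

Definition stern (n : nat) : {poly int} := stern_fuel n.+1 n.

(* e(n) = deg_t B_n(t) (used for n >= 1, where B_n <> 0) *)
Definition e (n : nat) : nat := (size (stern n)).-1.

Fixpoint nu_fuel (k n : nat) : nat :=
  match k with
  | 0%N => 0%N
  | k'.+1 => if n == 0%N then 0%N else (odd n + nu_fuel k' n./2)%N
  end.
Definition nu (n : nat) : nat := nu_fuel n n.

(* Main.v *)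
Require Import Defs.
From mathcomp Require Import all_boot all_order all_algebra.
From mathcomp Require Import zify.
Import Order.TTheory GRing.Theory Num.Theory.
Local Open Scope ring_scope.

Lemma nu_fuelE k1 k2 n : (n <= k1)%N -> (n <= k2)%N -> nu_fuel k1 n = nu_fuel k2 n.
Proof.
elim: k1 k2 n => [|k1 IH] [|k2] n h1 h2 /=.
- by [].
- by move: h1; rewrite leqn0 => /eqP ->.
- by move: h2; rewrite leqn0 => /eqP ->.
case: eqP => // /eqP n0; congr (_ + _)%N; apply: IH.
  have := odd_double_half n; lia.
have := odd_double_half n; lia.
Qed.

Lemma nu_rec n : (0 < n)%N -> nu n = (odd n + nu n./2)%N.
Proof.
case: n => // n _; rewrite /nu /=; congr (_ + _)%N; apply: nu_fuelE => //.
have := odd_double_half n.+1; lia.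
Qed.

Lemma nu0 : nu 0 = 0%N. Proof. by []. Qed.

Lemma nu_even m : nu (2 * m) = nu m.
Proof.
case: m => // m; rewrite nu_rec ?muln_gt0 //.
have -> : odd (2 * m.+1) = false by rewrite oddM.
by rewrite mul2n doubleK.
Qed.

Lemma nu_odd m : nu (2 * m + 1) = (nu m + 1)%N.
Proof.
rewrite nu_rec ?addn1 //.
have -> : odd (2 * m).+1 = true by rewrite oddS oddM.
rewrite mul2n /= uphalf_double; lia.
Qed.

Lemma stern_fuelE k1 k2 n : (n < k1)%N -> (n < k2)%N -> stern_fuel k1 n = stern_fuel k2 n.
Proof.
elim: k1 k2 n => [|k1 IH] [|k2] n h1 h2 //=.
case: n h1 h2 => [|[|n]] h1 h2 //.
have := odd_double_half n; case: ifP => o H.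
  by rewrite (IH k2) ?(IH k2 n./2.+2) //; lia.
by rewrite (IH k2) //; lia.
Qed.

Lemma stern_fuelS k n : stern_fuel k.+1 n.+2 =
  if odd n then stern_fuel k n./2.+1 + stern_fuel k n./2.+2 else 'X * stern_fuel k n./2.+1.
Proof. by rewrite /= negbK. Qed.

Lemma stern_rec n : (2 <= n)%N ->
  stern n = if odd n then stern n./2 + stern (n./2).+1 else 'X * stern n./2.
Proof.
case: n => [|[|n]] // _; rewrite {1}/stern stern_fuelS.
have -> : odd n.+2 = odd n by rewrite /= negbK.
have -> : n.+2./2 = n./2.+1 by [].
rewrite /stern.
have := odd_double_half n; case: ifP => o H.
  by rewrite (stern_fuelE n.+2 n./2.+2 n./2.+1) ?(stern_fuelE n.+2 n./2.+3 n./2.+2) //; lia.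
by rewrite (stern_fuelE n.+2 n./2.+2 n./2.+1) //; lia.
Qed.

Lemma stern_even m : (0 < m)%N -> stern (2 * m) = 'X * stern m.
Proof.
move=> m0; rewrite stern_rec; last lia.
by rewrite oddM /= mul2n doubleK.
Qed.

Lemma stern_odd m : (0 < m)%N -> stern (2 * m + 1) = stern m + stern m.+1.
Proof.
move=> m0; rewrite stern_rec; last lia.
by rewrite addn1 /= oddM /= mul2n uphalf_double.
Qed.

Lemma add_pos (p q : {poly int}) : 0 < lead_coef p -> 0 < lead_coef q ->
  0 < lead_coef (p + q) /\ size (p + q) = maxn (size p) (size q).
Proof.
move=> hp hq.
case: (ltngtP (size p) (size q)) => h.
- by rewrite lead_coefDr // addrC size_polyDl // (maxn_idPr (ltnW h)).
- by rewrite lead_coefDl // size_polyDl // (maxn_idPl (ltnW h)).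
have pn : p != 0 by rewrite -lead_coef_eq0 gt_eqF.
have ps : size p = (size p).-1.+1 by rewrite polySpred.
have hc : (p + q)`_(size p).-1 = lead_coef p + lead_coef q.
  by rewrite coefD /lead_coef h.
have hs : size (p + q) = size p.
  apply/eqP; rewrite eqn_leq; apply/andP; split.
    by have := size_polyD p q; rewrite -h maxnn.
  rewrite ps ltnNge; apply/negP => /leq_sizeP /(_ _ (leqnn _)).
  rewrite hc => /eqP; rewrite gt_eqF //; exact: addr_gt0.
by rewrite /lead_coef hs hc; split => //; exact: addr_gt0.
Qed.

Lemma stern_pos n : (0 < n)%N -> 0 < lead_coef (stern n).
Proof.
elim: n {-2}n (leqnn n) => [|N IH] n hn n0; first lia.
case: n hn n0 => [|[|n]] hn _ //.
  by rewrite /stern /= lead_coef1.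
have := odd_double_half n.
case o: (odd n) => /= H.
  have -> : n.+2 = (2 * (n./2).+1 + 1)%N by lia.
  rewrite stern_odd //.
  have h1 : (n./2.+1 <= N)%N by lia.
  have h2 : (n./2.+2 <= N)%N by lia.
  exact: (proj1 (add_pos _ _ (IH _ h1 isT) (IH _ h2 isT))).
have -> : n.+2 = (2 * (n./2).+1)%N by lia.
rewrite stern_even // mulrC lead_coefMX; apply: IH; lia.
Qed.

Lemma stern_neq0 n : (0 < n)%N -> stern n != 0.
Proof. by move/stern_pos; rewrite -lead_coef_eq0 => h; rewrite gt_eqF. Qed.

Lemma e_even m : (0 < m)%N -> e (2 * m) = (e m).+1.
Proof.
move=> m0; rewrite /e stern_even // mulrC (size_mulX (stern_neq0 _ m0)).
by rewrite (polySpred (stern_neq0 _ m0)).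
Qed.

Lemma e_odd m : (0 < m)%N -> e (2 * m + 1) = maxn (e m) (e m.+1).
Proof.
move=> m0; rewrite /e stern_odd //.
rewrite (proj2 (add_pos _ _ (stern_pos _ m0) (stern_pos _ (ltn0Sn m)))).
rewrite (polySpred (stern_neq0 _ m0)) (polySpred (stern_neq0 _ (ltn0Sn m))).
by rewrite maxnSS.
Qed.

Lemma e1 : e 1 = 0%N. Proof. by rewrite /e /stern /= size_poly1. Qed.

Lemma main_nat n :
  (forall i, (i <= n)%N -> (nu (n - i) <= nu i + e n.+1)%N) /\
  exists2 i, (i <= n)%N & nu (n - i) = (nu i + e n.+1)%N.
Proof.
elim: n {-2}n (leqnn n) => [|N IH] n hn.
  move: hn; rewrite leqn0 => /eqP ->; rewrite e1; split.
    by move=> i; rewrite leqn0 => /eqP ->.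
  by exists 0%N.
have := odd_double_half n.
case: (odd n) => /= H.
-
  set m := n./2 in H.
  have [IHa [j hj IHe]] := IH m ltac:(lia).
  have -> : n.+1 = (2 * m.+1)%N by lia.
  rewrite e_even //; split.
    move=> i hi; have := odd_double_half i.
    case: (odd i) => /= Hi; set i' := i./2 in Hi.
      have -> : i = (2 * i' + 1)%N by lia.
      have -> : (n - (2 * i' + 1) = 2 * (m - i'))%N by lia.
      rewrite nu_even nu_odd; have := IHa i' ltac:(lia); lia.
    have -> : i = (2 * i')%N by lia.
    have -> : (n - 2 * i' = 2 * (m - i') + 1)%N by lia.
    rewrite nu_even nu_odd; have := IHa i' ltac:(lia); lia.
  exists (2 * j)%N; first lia.
  have -> : (n - 2 * j = 2 * (m - j) + 1)%N by lia.
  rewrite nu_even nu_odd IHe; lia.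
- set m := n./2 in H.
  case: m H => [|m'] H.
    have -> : n = 0%N by lia.
    rewrite e1; split; first by move=> i; rewrite leqn0 => /eqP ->.
    by exists 0%N.
  have [IHa [j hj IHe]] := IH m'.+1 ltac:(lia).
  have [IHa' [j' hj' IHe']] := IH m' ltac:(lia).
  have -> : n.+1 = (2 * m'.+1 + 1)%N by lia.
  rewrite e_odd //; split.
    move=> i hi; have := odd_double_half i.
    case: (odd i) => /= Hi; set i' := i./2 in Hi.
      have -> : i = (2 * i' + 1)%N by lia.
      have -> : (n - (2 * i' + 1) = 2 * (m' - i') + 1)%N by lia.
      rewrite !nu_odd; have := IHa' i' ltac:(lia); lia.
    have -> : i = (2 * i')%N by lia.
    have -> : (n - 2 * i' = 2 * (m'.+1 - i'))%N by lia.
    rewrite !nu_even; have := IHa i' ltac:(lia); lia.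
  case: (leqP (e m'.+1) (e m'.+2)) => hle.
    exists (2 * j)%N; first lia.
    have -> : (n - 2 * j = 2 * (m'.+1 - j))%N by lia.
    rewrite !nu_even IHe; lia.
  exists (2 * j' + 1)%N; first lia.
  have -> : (n - (2 * j' + 1) = 2 * (m' - j') + 1)%N by lia.
  rewrite !nu_odd IHe'; lia.
Qed.

Theorem corollary3p8 (n : nat) :
  ((forall i : nat, (i <= n)%N -> (nu (n - i))%:Z - (nu i)%:Z <= (e n.+1)%:Z) /\
   (exists2 i : nat, (i <= n)%N & (nu (n - i))%:Z - (nu i)%:Z = (e n.+1)%:Z)) /\
  ((forall i : nat, (i <= n)%N -> - (e n.+1)%:Z <= (nu (n - i))%:Z - (nu i)%:Z) /\
   (exists2 i : nat, (i <= n)%N & (nu (n - i))%:Z - (nu i)%:Z = - (e n.+1)%:Z)).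
Proof.
have [Ha [j hj He]] := main_nat n.
split; split.
- move=> i hi; have := Ha i hi; lia.
- exists j => //; rewrite He; lia.
- move=> i hi; have := Ha (n - i)%N (leq_subr _ _).
  rewrite subKn //; lia.
- exists (n - j)%N; first exact: leq_subr.
  rewrite subKn // He; lia.
Qed.
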